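(* Let $\mathbb{S}$ be a metric space with its Borel $\sigma$-field, let $\{\mu_n\}_{n=1,2,\ldots}$ be a sequence of measures on $\mathbb{S}$ converging weakly to a finite measure $\mu$ on $\mathbb{S}$, and let $\{f_n,g_n\}_{n=1,2,\ldots}$ be measurable $[-\infty,+\infty]$-valued functions on $\mathbb{S}$ such that $|f_n(s)|\le g_n(s)$ for all $n$ and $s\in\mathbb{S}$, and $$\limsup_{n\to\infty}\int_{\mathbb{S}} g_n(s)\,\mu_n(ds)\le\int_{\mathbb{S}}\liminf_{n\to\infty,\,s'\to s} g_n(s')\,\mu(ds)<+\infty.$$ If $\lim_{n\to\infty,\,s'\to s}f_n(s')$ exists for $\mu$-a.e. $s\in\mathbb{S}$, then $$\lim_{n\to\infty}\int_{\mathbb{S}} f_n(s)\,\mu_n(ds)=\int_{\mathbb{S}}\lim_{n\to\infty,\,s'\to s} f_n(s')\,\mu(ds).$$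
   Context: Weak convergence: $\int f\,d\mu_n\to\int f\,d\mu$ for all bounded continuous $f$. Integrals of extended-real functions are $\int f^+-\int f^-$, defined when one of these is finite; all integrals involved are assumed defined. $\liminf_{n\to\infty,s'\to s}g_n(s'):=\sup_{n\ge1,\delta>0}\inf_{m\ge n,\,s'\in B_\delta(s)}g_m(s')$, and $\lim_{n\to\infty,s'\to s}f_n(s')$ exists when this liminf for $f_n$ equals the corresponding $\limsup:=\inf_{n\ge1,\delta>0}\sup_{m\ge n,\,s'\in B_\delta(s)}f_m(s')$; $B_\delta(s)$ is the ball of radius $\delta$ about $s$. *)

(* Defs.v *)
From HB Require Import structures.
From mathcomp Require Import all_boot all_order all_algebra.
From mathcomp Require Import all_classical all_reals all_analysis.
From mathcomp Require Import measurable_realfun.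
Set Implicit Arguments. Unset Strict Implicit. Unset Printing Implicit Defensive.
Import Order.TTheory GRing.Theory Num.Theory.
Import numFieldNormedType.Exports.
Local Open Scope classical_set_scope.
Local Open Scope ring_scope.
Local Open Scope ereal_scope.

(* Nonempty metric spaces (pointedness is needed by the library's generated
   sigma-algebra construction; the empty case is trivial). *)
#[short(type="pointedMetricType")]
HB.structure Definition PointedMetric (K : numDomainType) :=
  { M of Metric K M & isPointed M }.

Definition borel_gen {R : realType} (T : pointedMetricType R) : set (set T) :=
  @open T.
Arguments borel_gen {R} T.
Notation Borel T := (g_sigma_algebraType (borel_gen T)).

Definition liminf2 {R : realType} {T : pointedMetricType R} (g : nat -> T -> \bar R)
  (s : T) : \bar R :=
  ereal_sup ((fun q : nat * R => ereal_inf ((fun p : nat * T => g p.1 p.2) @`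
                         [set p : nat * T | (q.1 <= p.1)%N /\ @ball R T s q.2 p.2]))
            @` [set q : nat * R | (0 < q.2)%R]).

Definition limsup2 {R : realType} {T : pointedMetricType R} (f : nat -> T -> \bar R)
  (s : T) : \bar R :=
  ereal_inf ((fun q : nat * R => ereal_sup ((fun p : nat * T => f p.1 p.2) @`
                         [set p : nat * T | (q.1 <= p.1)%N /\ @ball R T s q.2 p.2]))
            @` [set q : nat * R | (0 < q.2)%R]).

(* the limit lim_{n -> oo, s' -> s} f_n(s'): the common value of liminf2 and
   limsup2 wherever these agree (we use liminf2 as representative). *)
Definition lim2 {R : realType} {T : pointedMetricType R} (f : nat -> T -> \bar R)
  (s : T) : \bar R := liminf2 f s.

Definition weakly_converges {R : realType} {T : pointedMetricType R}
  (mu_ : nat -> {measure set (Borel T) -> \bar R})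
  (mu : {measure set (Borel T) -> \bar R}) : Prop :=
  forall phi : T -> R, continuous phi -> (exists M : R, forall x, (`|phi x| <= M)%R) ->
    (fun n => \int[mu_ n]_(x in [set: Borel T]) (phi x)%:E) @ \oo -->
      \int[mu]_(x in [set: Borel T]) (phi x)%:E.

(* Main.v *)
Require Import Defs.
From HB Require Import structures.
From mathcomp Require Import all_boot all_order all_algebra.
From mathcomp Require Import all_classical all_reals all_analysis.
From mathcomp Require Import measurable_realfun.
From mathcomp Require Import lra.
Import Order.TTheory GRing.Theory Num.Theory.
Import numFieldNormedType.Exports.
Local Open Scope classical_set_scope.
Local Open Scope ring_scope.
Local Open Scope ereal_scope.

Section S.
Context {R : realType} {T : pointedMetricType R}.

Lemma open_meas (A : set T) : open A -> measurable (A : set (Borel T)).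
Proof. move=> oA; exact: sub_sigma_algebra. Qed.

Lemma lsc_meas (v : T -> \bar R) : (forall c : R, open [set x | c%:E < v x]) ->
  measurable_fun [set: Borel T] (v : Borel T -> \bar R).
Proof.
move=> ov; apply: (measurability _ (ErealGenOInfty.measurableE R)).
move=> /= _ [_ [a ->]] <-; apply: measurableI => //.
rewrite preimage_itvoy; exact: open_meas.
Qed.

Lemma usc_meas (v : T -> \bar R) : (forall c : R, open [set x | v x < c%:E]) ->
  measurable_fun [set: Borel T] (v : Borel T -> \bar R).
Proof.
move=> ov; apply: (measurability _ (ErealGenInftyO.measurableE R)).
move=> /= _ [_ [a ->]] <-; apply: measurableI => //.
rewrite preimage_itvNyo; exact: open_meas.
Qed.

Lemma open_ballP (A : set T) : (forall x, A x -> exists2 r : R, (0 < r)%R & forall y, (mdist x y < r)%R -> A y) -> open A.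
Proof.
move=> H; rewrite openE => x Ax; rewrite /interior; apply/nbhs_ballP.
have [r r0 Hr] := H x Ax; exists r => // y; rewrite /= ballEmdist /=; exact: Hr.
Qed.


Definition rk (k : nat) : R := (k.+1%:R)^-1.
Lemma rk_gt0 k : (0 < rk k)%R. Proof. by rewrite /rk invr_gt0 ltr0n. Qed.
Lemma rk_le k k' : (k <= k')%N -> (rk k' <= rk k)%R.
Proof. by move=> kk; rewrite /rk lef_pV2 ?posrE ?ltr0n// ler_nat ltnS. Qed.
Lemma rk_small (e : R) : (0 < e)%R -> exists k, forall k', (k <= k')%N -> (rk k' < e)%R.
Proof.
move=> e0; exists (Num.truncn e^-1) => k' kk'.
rewrite /rk -(invrK e) ltf_pV2 ?posrE ?ltr0n ?invr_gt0//.
by rewrite -truncn_le_nat.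
Qed.

Definition Uf (h : nat -> T -> \bar R) (k : nat) (s : T) : \bar R :=
  ereal_inf ((fun p : nat * T => h p.1 p.2) @`
     [set p : nat * T | (k <= p.1)%N /\ @ball R T s (rk k) p.2]).

Definition Vf (h : nat -> T -> \bar R) (k : nat) (x : T) : \bar R :=
  ereal_sup [set Uf h k s | s in @ball R T x (rk k)].

Lemma Uf_nd h s k k' : (k <= k')%N -> Uf h k s <= Uf h k' s.
Proof.
move=> kk; apply: le_ereal_inf => _ [p [p1 p2] <-]; exists p => //; split.
  exact: leq_trans p1.
move: p2; apply: le_ball; exact: rk_le.
Qed.

Lemma liminf2_sup h s : liminf2 h s = ereal_sup (range (fun k => Uf h k s)).
Proof.
apply/eqP; rewrite eq_le; apply/andP; split.
- apply: ge_ereal_sup => _ [q /= q0 <-].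
  have [k0 Hk0] := @rk_small q.2 q0.
  pose k := maxn q.1 k0.
  apply: (@le_trans _ _ (Uf h k s)); last by apply: ereal_sup_ubound; exists k.
  apply: le_ereal_inf => _ [p [p1 p2] <-]; exists p => //; split.
    exact: leq_trans (leq_maxl _ _) p1.
  move: p2; apply: le_ball; apply/ltW/Hk0; exact: leq_maxr.
- apply: ge_ereal_sup => _ [k _ <-]; apply: ereal_sup_ubound.
  by exists (k, rk k) => //=; exact: rk_gt0.
Qed.

Lemma Uf_cvg h s : (fun k => Uf h k s) @ \oo --> liminf2 h s.
Proof.
rewrite liminf2_sup; apply: ereal_nondecreasing_cvgn => m n mn; exact: Uf_nd.
Qed.

Lemma Uf_usc h k (c : R) : open [set x | Uf h k x < c%:E].
Proof.
apply: open_ballP => x /= /ereal_inf_lt [_ [p [p1 p2] <-] hp].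
move: p2; rewrite ballEmdist /= => p2.
exists (rk k - mdist x p.2)%R; first by rewrite subr_gt0.
move=> y yx; apply: le_lt_trans hp; apply: ereal_inf_lbound; exists p => //.
split => //; rewrite ballEmdist /=.
rewrite (le_lt_trans (metric_triangle _ x _))// metric_sym.
by rewrite -ltrBrDr.
Qed.

Lemma Vf_lsc h k (c : R) : open [set x | c%:E < Vf h k x].
Proof.
apply: open_ballP => x /= /ereal_sup_gt [_ [s xs <-] hs].
move: xs; rewrite ballEmdist /= => xs.
exists (rk k - mdist x s)%R; first by rewrite subr_gt0.
move=> y yx; apply: lt_le_trans hs _; apply: ereal_sup_ubound; exists s => //.
rewrite ballEmdist /=.
rewrite (le_lt_trans (metric_triangle _ x _))// metric_sym.
by rewrite -ltrBrDr.
Qed.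

Lemma Uf_le_Vf h k x : Uf h k x <= Vf h k x.
Proof. apply: ereal_sup_ubound; exists x => //; exact: (ball_center _ (PosNum (rk_gt0 k))). Qed.

Lemma Vf_le h k n x : (k <= n)%N -> Vf h k x <= h n x.
Proof.
move=> kn; apply: ge_ereal_sup => _ [s xs <-].
apply: ereal_inf_lbound; exists (n, x) => //; split => //.
exact: ball_sym.
Qed.

Lemma liminf2_meas h : measurable_fun [set: Borel T] (liminf2 h : Borel T -> \bar R).
Proof.
apply: (@emeasurable_fun_cvg _ (Borel T) R setT (fun k => (Uf h k : Borel T -> \bar R))).
  move=> k; apply: usc_meas; exact: Uf_usc.
move=> x _; exact: Uf_cvg.
Qed.

Lemma Vf_meas h k : measurable_fun [set: Borel T] (Vf h k : Borel T -> \bar R).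
Proof. apply: lsc_meas; exact: Vf_lsc. Qed.


Lemma ereal_le_by_reals (x y : \bar R) :
  (forall c : R, c%:E < x -> c%:E <= y) -> x <= y.
Proof.
move=> H; case: y H => [s| |] H; last 2 first.
- by rewrite leey.
- case: x H => [r| |] H //.
  + by have := H (r - 1)%R; rewrite lte_fin ltrBlDr ltrDl ltr01 => /(_ isT).
  + by have := H 0%R; rewrite ltey => /(_ isT).
case: x H => [r| |] H; last by rewrite leNye.
- rewrite lee_fin leNgt; apply/negP => sr.
  have [h1 h2] := midf_lt sr.
  by have := H ((s + r) / 2)%R; rewrite lte_fin h2 lee_fin => /(_ isT); rewrite leNgt h1.
- have := H (s + 1)%R; rewrite ltey lee_fin => /(_ isT) hs; clear H; exfalso; lra.
Qed.

Definition psi (v : T -> \bar R) (j : nat) (x : T) : \bar R :=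
  ereal_inf [set Order.min (v y) (j%:R)%:E + (j%:R * mdist x y)%:E | y in [set: T]].

Section psi.
Variable v : T -> \bar R.
Hypothesis v0 : forall y, 0 <= v y.

Lemma psi_ge0 j x : 0 <= psi v j x.
Proof.
apply: le_ereal_inf_tmp => _ [y _ <-]; apply: adde_ge0.
  by rewrite le_min v0 lee_fin ler0n.
by rewrite lee_fin mulr_ge0 ?ler0n ?mdist_ge0.
Qed.

Lemma psi_le j x : psi v j x <= Order.min (v x) (j%:R)%:E.
Proof.
apply: ereal_inf_lbound; exists x => //.
by rewrite mdistxx mulr0 adde0.
Qed.

Lemma psi_fin j x : psi v j x \is a fin_num.
Proof.
rewrite ge0_fin_numE ?psi_ge0//.
apply: (le_lt_trans (psi_le j x)).
by rewrite gt_min; apply/orP; right; exact: ltey.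
Qed.

Lemma psi_lip j x x' : psi v j x <= psi v j x' + (j%:R * mdist x x')%:E.
Proof.
rewrite -leeBlDr//; apply: le_ereal_inf_tmp => _ [y _ <-].
rewrite leeBlDr//; apply: (le_trans (ereal_inf_lbound _)).
  by exists y.
rewrite -addeA leeD2l// -EFinD lee_fin -mulrDr ler_wpM2l ?ler0n//.
by rewrite (le_trans (metric_triangle _ x' _))// metric_sym addrC.
Qed.

Lemma psi_nd x : {homo (fun j => psi v j x) : j j' / (j <= j')%N >-> j <= j'}.
Proof.
move=> j j' jj; apply: le_ereal_inf_tmp => _ [y _ <-].
apply: (le_trans (ereal_inf_lbound _)); first by exists y.
apply: leeD.
  by rewrite le_min !ge_min lexx lee_fin ler_nat jj !orbT.
by rewrite lee_fin ler_wpM2r ?mdist_ge0// ler_nat.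
Qed.

Hypothesis vlsc : forall c : R, open [set x | c%:E < v x].

Lemma psi_cvg x : (fun j => psi v j x) @ \oo --> v x.
Proof.
have -> : v x = ereal_sup (range (fun j => psi v j x)).
  apply/eqP; rewrite eq_le; apply/andP; split; last first.
    apply: ge_ereal_sup => _ [j _ <-]; apply: (le_trans (psi_le j x)).
    by rewrite ge_min lexx.
  apply: ereal_le_by_reals => c cv.
  have [c0|c0] := leP c 0%R.
    apply: le_ereal_sup_tmp; exists (psi v 0 x); first by exists 0%N.
    by apply: le_trans (psi_ge0 0 x); rewrite lee_fin.
  have /nbhs_ballP [del del0 Hdel] : nbhs x [set y | c%:E < v y].
    by apply: open_nbhs_nbhs; split => //; exact: vlsc.
  pose j := (Num.truncn c + Num.truncn (c / del))%N.+1.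
  have jc : (c <= j%:R)%R.
    apply/ltW; apply: (lt_le_trans (truncnS_gt c)).
    by rewrite ler_nat ltnS leq_addr.
  have jd : (c <= j%:R * del)%R.
    rewrite -ler_pdivrMr//; apply/ltW; apply: (lt_le_trans (truncnS_gt _)).
    by rewrite ler_nat ltnS leq_addl.
  apply: le_ereal_sup_tmp; exists (psi v j x); first by exists j.
  apply: le_ereal_inf_tmp => _ [y _ <-].
  have [xy|xy] := ltP (mdist x y) del.
    have cy : c%:E < v y by apply: Hdel; rewrite /= ballEmdist.
    rewrite -[c%:E]adde0; apply: leeD.
      by rewrite le_min (ltW cy) lee_fin jc.
    by rewrite lee_fin mulr_ge0 ?ler0n ?mdist_ge0.
  rewrite -[c%:E]add0e; apply: leeD.
    by rewrite le_min v0 lee_fin ler0n.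
  rewrite lee_fin (le_trans jd)// ler_wpM2l ?ler0n//.
apply: ereal_nondecreasing_cvgn; exact: psi_nd.
Qed.

Definition phi j x : R := fine (psi v j x).

Lemma phiE j x : (phi j x)%:E = psi v j x.
Proof. by rewrite /phi fineK// psi_fin. Qed.

Lemma phi_lip j x x' : (`|phi j x - phi j x'| <= j%:R * mdist x x')%R.
Proof.
have h1 := psi_lip j x x'; have h2 := psi_lip j x' x.
rewrite -!phiE -EFinD lee_fin in h1; rewrite -!phiE -EFinD lee_fin in h2.
rewrite metric_sym in h2; rewrite ler_norml; apply/andP; split; lra.
Qed.

Lemma phi_cont j : continuous (phi j).
Proof.
move=> x; apply/cvgrPdist_le => e e0.
have : nbhs x (ball x (e / j.+1%:R)).
  by apply: nbhsx_ballx; rewrite divr_gt0// ltr0n.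
apply: filterS => t; rewrite ballEmdist /= => xt.
apply: (le_trans (phi_lip j x t)).
apply: (le_trans (y := (j.+1%:R * mdist x t)%R)).
  by rewrite ler_wpM2r ?mdist_ge0// ler_nat.
by rewrite -ler_pdivlMl ?ltr0n// mulrC ltW.
Qed.

Lemma phi_bound j x : (`|phi j x| <= j%:R)%R.
Proof.
rewrite ger0_norm; last by rewrite -lee_fin phiE psi_ge0.
rewrite -lee_fin phiE (le_trans (psi_le j x))//.
by rewrite ge_min lexx orbT.
Qed.

Lemma psi_meas j : measurable_fun [set: Borel T] (psi v j : Borel T -> \bar R).
Proof.
apply: lsc_meas => c.
have -> : [set x | c%:E < psi v j x] = phi j @^-1` [set r | (c < r)%R].
  by apply/seteqP; split => x /=; rewrite -phiE lte_fin.
by move/continuousP : (phi_cont j); apply; exact: open_gt.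
Qed.

End psi.


Lemma le_limn_einf (u w : (\bar R)^nat) N : (forall n, (N <= n)%N -> u n <= w n) ->
  limn_einf u <= limn_einf w.
Proof.
move=> uw; rewrite !limn_einf_lim; apply: lee_lim; [exact: is_cvg_einfs|exact: is_cvg_einfs|].
exists N => // n /= Nn; apply: le_ereal_inf_tmp => _ [m /= nm <-].
apply: ge_ereal_inf; exists (u m); first by exists m.
by apply: uw; exact: leq_trans nm.
Qed.

Lemma limn_einf_le (u : (\bar R)^nat) l : (forall n, u n <= l) -> limn_einf u <= l.
Proof.
move=> ul; rewrite limn_einf_lim; apply: lime_le; first exact: is_cvg_einfs.
apply: nearW => n; apply: ge_ereal_inf; exists (u n) => //. by exists n => /=.
Qed.


Lemma abse_le_bnd (x y : \bar R) : - y <= x -> x <= y -> `|x| <= y.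
Proof.
move=> h1 h2; have [x0|x0] := leP 0 x; first by rewrite gee0_abs.
by rewrite lte0_abs // leeNl.
Qed.

Lemma Nabse_le (x : \bar R) : - `|x| <= x.
Proof. by rewrite leeNl -abseN lee_abs. Qed.

Lemma Uf_le (h1 h2 : nat -> T -> \bar R) k s :
  (forall n x, h1 n x <= h2 n x) -> Uf h1 k s <= Uf h2 k s.
Proof.
move=> H; apply: le_ereal_inf_tmp => _ [p pP <-].
apply: le_trans (H p.1 p.2); apply: ereal_inf_lbound; by exists p.
Qed.

Lemma liminf2_le (h1 h2 : nat -> T -> \bar R) s :
  (forall n x, h1 n x <= h2 n x) -> liminf2 h1 s <= liminf2 h2 s.
Proof.
move=> H; rewrite !liminf2_sup; apply: ge_ereal_sup => _ [k _ <-].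
apply: le_ereal_sup_tmp; exists (Uf h2 k s); first by exists k.
exact: Uf_le.
Qed.

Lemma liminf2N (f : nat -> T -> \bar R) s :
  liminf2 (fun n x => - f n x) s = - limsup2 f s.
Proof.
rewrite /liminf2 /limsup2 -ereal_supN image_comp; congr ereal_sup.
apply: eq_imagel => q _ /=; rewrite -ereal_infN image_comp; congr ereal_inf.
Qed.

Lemma liminf2_add (g f h : nat -> T -> \bar R) s :
  (forall n x, g n x + f n x <= h n x) -> liminf2 f s \is a fin_num ->
  liminf2 g s + liminf2 f s <= liminf2 h s.
Proof.
move=> H Lf.
have cv : (fun k => Uf g k s + Uf f k s) @ \oo --> liminf2 g s + liminf2 f s.
  by apply: cvgeD; [exact: fin_num_adde_defl|exact: Uf_cvg|exact: Uf_cvg].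
rewrite -(cvg_lim _ cv)// -(cvg_lim _ (Uf_cvg h s))//.
apply: lee_lim.
- by apply/cvg_ex; eexists; exact: cv.
- by apply/cvg_ex; eexists; exact: Uf_cvg.
apply: nearW => k; apply: le_ereal_inf_tmp => _ [p pP <-].
apply: le_trans (H p.1 p.2); apply: leeD; apply: ereal_inf_lbound; by exists p.
Qed.

Lemma limn_einf_gt (u : (\bar R)^nat) l : l < limn_einf u -> \forall n \near \oo, l < u n.
Proof.
rewrite limn_einf_lim (cvg_lim _ (@cvg_einfs_sup R u))// => /ereal_sup_gt[_ [N _ <-] lN].
exists N => // n /= Nn; apply: lt_le_trans lN _; apply: ereal_inf_lbound; by exists n.
Qed.

Lemma limn_esup_lt (u : (\bar R)^nat) l : limn_esup u < l -> \forall n \near \oo, u n < l.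
Proof.
rewrite limn_esup_lim (cvg_lim _ (@cvg_esups_inf R u))// => /ereal_inf_lt[_ [N _ <-] lN].
exists N => // n /= Nn; apply: le_lt_trans lN; apply: ereal_sup_ubound; by exists n.
Qed.

Section weak.
Variables (mu_ : nat -> {measure set (Borel T) -> \bar R})
  (mu : {measure set (Borel T) -> \bar R}).
Hypothesis wc : weakly_converges mu_ mu.

Lemma portmanteau (v : T -> \bar R) : (forall y, 0 <= v y) ->
  (forall c : R, open [set x | c%:E < v x]) ->
  \int[mu]_(x in [set: Borel T]) v x <=
    limn_einf (fun n => \int[mu_ n]_(x in [set: Borel T]) v x).
Proof.
move=> v0 vlsc.
have cv : (fun j => \int[mu]_(x in [set: Borel T]) psi v j x) @ \oo -->
    \int[mu]_(x in [set: Borel T]) v x.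
  have := @cvg_monotone_convergence _ (Borel T) R mu setT measurableT (psi v)
    (psi_meas _ v0) (fun n x _ => psi_ge0 _ v0 n x) (fun x _ => psi_nd v x).
  congr (_ --> _); apply: eq_integral => x _.
  by apply: cvg_lim => //; exact: (psi_cvg _ v0 vlsc).
rewrite -(cvg_lim _ cv)//; apply: lime_le; first by apply/cvg_ex; eexists; exact: cv.
apply: nearW => j.
have wj := wc _ (phi_cont _ v0 j) (ex_intro _ j%:R (phi_bound _ v0 j)).
have Ephi : (fun x => (phi v j x)%:E) = psi v j by apply/funext => x; rewrite (phiE _ v0).
rewrite Ephi in wj.
rewrite -(cvg_limn_einf_sup wj).1.
apply: (@le_limn_einf _ _ 0) => n _; apply: ge0_le_integral => //.
- by move=> x _; exact: (psi_ge0 _ v0).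
- exact: (psi_meas _ v0).
- exact: lsc_meas.
- by move=> x _; rewrite (le_trans (psi_le v j x))// ge_min lexx.
Qed.


Lemma Uf_ge0 (h : nat -> T -> \bar R) k x : (forall n x, 0 <= h n x) -> 0 <= Uf h k x.
Proof. by move=> h0; apply: le_ereal_inf_tmp => _ [p _ <-]; exact: h0. Qed.

Lemma weak_fatou (h : nat -> T -> \bar R) : (forall n x, 0 <= h n x) ->
  (forall n, measurable_fun [set: Borel T] (h n : Borel T -> \bar R)) ->
  \int[mu]_(x in [set: Borel T]) liminf2 h x <=
    limn_einf (fun n => \int[mu_ n]_(x in [set: Borel T]) h n x).
Proof.
move=> h0 mh.
have V0 k x : 0 <= Vf h k x.
  exact: (le_trans (Uf_ge0 h k x h0) (Uf_le_Vf h k x)).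
have mV k := Vf_meas h k.
have mlim : measurable_fun [set: Borel T]
    ((fun x => limn_einf (fun k => Vf h k x)) : Borel T -> \bar R).
  have -> : (fun x => limn_einf (fun k => Vf h k x)) =
      (fun x => limn (einfs (fun k => Vf h k x))).
    by apply/funext => x; rewrite limn_einf_lim.
  apply: (@emeasurable_fun_cvg _ (Borel T) R setT
     (fun n => (fun x => einfs (fun k => Vf h k x) n) : Borel T -> \bar R)).
    by move=> n; exact: measurable_fun_einfs.
  by move=> x _; exact: is_cvg_einfs.
apply: (@le_trans _ _ (\int[mu]_(x in [set: Borel T]) limn_einf (fun k => Vf h k x))).
  apply: ge0_le_integral => //.
  - by move=> x _; rewrite liminf2_sup; apply: le_ereal_sup_tmp;
      exists (Uf h 0 x); [by exists 0%N|exact: (Uf_ge0 h 0 x h0)].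
  - exact: liminf2_meas.
  - move=> x _; rewrite liminf2_sup; apply: ge_ereal_sup => _ [k _ <-].
    rewrite limn_einf_lim; apply: lime_ge; first exact: is_cvg_einfs.
    exists k => // n /= kn; apply: le_ereal_inf_tmp => _ [m /= nm <-].
    apply: le_trans (Uf_le_Vf h m x); apply: Uf_nd; exact: leq_trans nm.
apply: le_trans; first exact: (@fatou _ (Borel T) R mu setT measurableT (fun k => Vf h k) mV (fun n x _ => V0 n x)).
apply: limn_einf_le => k.
apply: le_trans; first exact: (@portmanteau (Vf h k) (V0 k) (Vf_lsc h k)).
apply: (@le_limn_einf _ _ k) => n kn; apply: ge0_le_integral => //.
by move=> x _; exact: Vf_le.
Qed.


Section main.
Variables (g f : nat -> T -> \bar R).
Hypothesis mg : forall n, measurable_fun [set: Borel T] (g n : Borel T -> \bar R).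
Hypothesis mf : forall n, measurable_fun [set: Borel T] (f n : Borel T -> \bar R).
Hypothesis fg : forall n s, `|f n s| <= g n s.
Hypothesis Hsup : limn_esup (fun n => \int[mu_ n]_(x in [set: Borel T]) g n x)
    <= \int[mu]_(x in [set: Borel T]) liminf2 g x.
Hypothesis Hfin : \int[mu]_(x in [set: Borel T]) liminf2 g x < +oo.
Hypothesis HL : {ae mu, forall s : Borel T, - liminf2 g s <= liminf2 f s}.

Lemma ML : mu.-integrable [set: Borel T] (liminf2 f : Borel T -> \bar R) /\
  forall e : R, (0 < e)%R -> \forall n \near \oo,
    \int[mu]_(x in [set: Borel T]) liminf2 f x - e%:E <=
    \int[mu_ n]_(x in [set: Borel T]) f n x.
Proof.
have g0 n x : 0 <= g n x by apply: le_trans (abse_ge0 _) (fg n x).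
have G0 x : 0 <= liminf2 g x.
  rewrite liminf2_sup; apply: le_ereal_sup_tmp; exists (Uf g 0 x); first by exists 0%N.
  exact: Uf_ge0.
have mG := liminf2_meas g; have mL := liminf2_meas f.
have LG x : liminf2 f x <= liminf2 g x.
  by apply: liminf2_le => n y; apply: le_trans (lee_abs _) (fg n y).
have iG : mu.-integrable [set: Borel T] (liminf2 g : Borel T -> \bar R).
  apply/integrableP; split => //.
  by under eq_integral => x _ do rewrite gee0_abs ?G0//.
have aeG := integrable_ae measurableT iG.
have iL : mu.-integrable [set: Borel T] (liminf2 f : Borel T -> \bar R).
  apply/integrableP; split => //; apply: le_lt_trans Hfin.
  apply: ae_ge0_le_integral => //.
  - exact: measurableT_comp.
  - by apply: filterS HL => x hx _; exact: abse_le_bnd hx (LG x).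
have aeL := integrable_ae measurableT iL.
split => // e e0.
pose h n x := maxe (g n x + f n x) 0.
have h0 n x : 0 <= h n x by rewrite /h le_max lexx orbT.
have mh n : measurable_fun [set: Borel T] (h n : Borel T -> \bar R).
  by apply: measurable_maxe => //; exact: emeasurable_funD.
have WF := @weak_fatou h h0 mh.
have finJ := integrable_fin_num measurableT iG.
have finK := integrable_fin_num measurableT iL.
have Hh0 x : 0 <= liminf2 h x.
  rewrite liminf2_sup; apply: le_ereal_sup_tmp; exists (Uf h 0 x); first by exists 0%N.
  exact: Uf_ge0.
have JK : \int[mu]_(x in [set: Borel T]) liminf2 g x +
          \int[mu]_(x in [set: Borel T]) liminf2 f x <=
          \int[mu]_(x in [set: Borel T]) liminf2 h x.
  rewrite -integralD//.
  rewrite (ae_eq_integral (fun x : Borel T => maxe (liminf2 g x + liminf2 f x) 0))//.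
  - apply: ae_ge0_le_integral => //.
    + by move=> x _; rewrite le_max lexx orbT.
    + by apply: measurable_maxe => //; exact: emeasurable_funD.
    + exact: liminf2_meas.
    + apply: filterS aeL => x hx _; rewrite ge_max Hh0 andbT.
      apply: liminf2_add; last exact: (hx I).
      by move=> n y; rewrite /h le_max lexx.
  - exact: emeasurable_funD.
  - by apply: measurable_maxe => //; exact: emeasurable_funD.
  - apply: filterS2 aeG HL => x hx hL _; rewrite max_l//.
    have Gf := hx I.
    by rewrite -(subee Gf) leeD2l.
have hc := le_trans JK WF.
set J := \int[mu]_(x in [set: Borel T]) liminf2 g x in finJ hc JK.
set K := \int[mu]_(x in [set: Borel T]) liminf2 f x in finK hc JK *.
have Hsup' := Hsup; rewrite -/J in Hsup'.
have [j Jj] : exists j : R, J = j%:E by exists (fine J); rewrite fineK.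
have [k Kk] : exists k : R, K = k%:E by exists (fine K); rewrite fineK.
rewrite Jj in Hsup'; rewrite Jj Kk in hc; rewrite Kk.
have ev1 : \forall n \near \oo,
    (j + k - e / 2)%:E < \int[mu_ n]_(x in [set: Borel T]) h n x.
  apply: limn_einf_gt; apply: lt_le_trans hc.
  rewrite -EFinD lte_fin; lra.
have ev2 : \forall n \near \oo,
    \int[mu_ n]_(x in [set: Borel T]) g n x < (j + e / 2)%:E.
  apply: limn_esup_lt; apply: le_lt_trans Hsup' _.
  rewrite lte_fin; lra.
apply: filterS2 ev1 ev2 => n h1 h2.
have ig : (mu_ n).-integrable [set: Borel T] (g n : Borel T -> \bar R).
  apply/integrableP; split => //.
  under eq_integral => x _ do rewrite gee0_abs ?g0//.
  exact: lt_trans h2 (ltry _).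
have if_ : (mu_ n).-integrable [set: Borel T] (f n : Borel T -> \bar R).
  apply: le_integrable ig => //.
  by move=> x _; apply: le_trans (fg n x) (lee_abs _).
have ceq : \int[mu_ n]_(x in [set: Borel T]) h n x =
    \int[mu_ n]_(x in [set: Borel T]) g n x + \int[mu_ n]_(x in [set: Borel T]) f n x.
  rewrite -integralD//; apply: ae_eq_integral => //.
  - exact: emeasurable_funD.
  - apply: filterS (integrable_ae measurableT ig) => x hx _.
    rewrite /h max_l//; have Gf := hx I.
    rewrite -(subee Gf) leeD2l//.
    by apply: le_trans (Nabse_le _); rewrite leeN2.
have fb := integrable_fin_num measurableT ig.
have fa := integrable_fin_num measurableT if_.
rewrite ceq in h1.
move: h1 h2; rewrite -(fineK fb) -(fineK fa) -EFinD !lte_fin => h1 h2.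
by rewrite -EFinB lee_fin; lra.
Qed.

End main.
End weak.

End S.

Theorem corollary2p10 (R : realType) (T : pointedMetricType R)
  (mu_ : nat -> {measure set (Borel T) -> \bar R})
  (mu : {measure set (Borel T) -> \bar R})
  (f g : nat -> Borel T -> \bar R) :
  weakly_converges mu_ mu ->
  mu [set: Borel T] < +oo ->
  (forall n, measurable_fun [set: Borel T] (f n)) ->
  (forall n, measurable_fun [set: Borel T] (g n)) ->
  (forall n s, `|f n s| <= g n s) ->
  limn_esup (fun n => \int[mu_ n]_(s in [set: Borel T]) g n s)
    <= \int[mu]_(s in [set: Borel T]) liminf2 g s ->
  \int[mu]_(s in [set: Borel T]) liminf2 g s < +oo ->
  {ae mu, forall s, liminf2 f s = limsup2 f s} ->
  (fun n => \int[mu_ n]_(s in [set: Borel T]) f n s) @ \oo -->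
    \int[mu]_(s in [set: Borel T]) lim2 f s.
Proof.
move=> wc _ mf mg fg Hsup Hfin Hae.
rewrite /lim2.
pose fN := fun n (x : T) => - f n x.
have mfN n : measurable_fun [set: Borel T] (fN n : Borel T -> \bar R).
  exact: measurableT_comp (mf n).
have fgN n s : `|fN n s| <= g n s by rewrite /fN abseN.
have gfN n x : fN n x <= g n x by apply: le_trans (lee_abs _) (fgN n x).
have gf n x : f n x <= g n x by apply: le_trans (lee_abs _) (fg n x).
have HL1 : {ae mu, forall s : Borel T, - liminf2 g s <= liminf2 f s}.
  apply: (@filterS _ _ (ae_filter_ringOfSetsType mu) _ _ _ Hae) => s hs; rewrite leeNl hs -liminf2N.
  exact: liminf2_le.
have HL2 : {ae mu, forall s : Borel T, - liminf2 g s <= liminf2 fN s}.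
  apply: (@filterS _ _ (ae_filter_ringOfSetsType mu) _ _ _ Hae) => s hs; rewrite liminf2N leeN2 -hs.
  exact: liminf2_le.
have [iL ev1] := ML _ _ wc _ _ mg mf fg Hsup Hfin HL1.
have [iLN ev2] := ML _ _ wc _ _ mg mfN fgN Hsup Hfin HL2.
have INeq : \int[mu]_(x in [set: Borel T]) liminf2 fN x =
    - \int[mu]_(x in [set: Borel T]) liminf2 f x.
  rewrite -integralN; last first.
    by apply: fin_num_adde_defl; rewrite fin_numN; exact: integrable_neg_fin_num.
  apply: ae_eq_integral => //.
  - exact: liminf2_meas.
  - by apply: (@measurableT_comp _ _ _ _ _ _ -%E _ (liminf2 f : Borel T -> \bar R)) => //; exact: liminf2_meas.
  - by apply: (@filterS _ _ (ae_filter_ringOfSetsType mu) _ _ _ Hae) => s hs _; rewrite liminf2N hs.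
have ev0 : \forall n \near \oo, (mu_ n).-integrable [set: Borel T] (f n).
  have : \forall n \near \oo, \int[mu_ n]_(x in [set: Borel T]) g n x < +oo.
    by apply: limn_esup_lt; exact: le_lt_trans Hsup Hfin.
  apply: filterS => n hn.
  have g0 x : 0 <= g n x by apply: le_trans (abse_ge0 _) (fg n x).
  have ig : (mu_ n).-integrable [set: Borel T] (g n).
    apply/integrableP; split => //.
    by under eq_integral => x _ do rewrite gee0_abs ?g0//.
  apply: le_integrable ig => //.
  by move=> x _; apply: le_trans (fg n x) (lee_abs _).
have finI := integrable_fin_num measurableT iL.
set I := \int[mu]_(x in [set: Borel T]) liminf2 f x in finI INeq ev1 *.
have [i Ii] : exists i : R, I = i%:E by exists (fine I); rewrite fineK.
rewrite Ii in INeq ev1 *.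
apply/fine_cvgP; split.
  apply: filterS ev0 => n hn; exact: integrable_fin_num.
apply/cvgrPdist_le => e e0.
apply: filter_app (ev1 e e0); apply: filter_app (ev2 e e0).
apply: filterS ev0 => n iF h2 h1.
have fa := integrable_fin_num measurableT iF.
move: h1 h2; rewrite INeq /fN integralN; last first.
  by apply: fin_num_adde_defl; rewrite fin_numN; exact: integrable_neg_fin_num.
rewrite -(fineK fa) -!EFinN -!EFinB !lee_fin /= => h1 h2.
rewrite ler_distlC; apply/andP; split; lra.
Qed.
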